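(* Let $n\ge1$. For every permutation $\sigma$ of $\{1,\ldots,n\}$ let $P(\sigma)$ be its set-size record, and define $\mathrm{stackit}(\sigma)=S(P(\sigma))$ and $\mathrm{queueit}(\sigma)=Q(P(\sigma))$. Then $\mathrm{stackit}\circ\mathrm{stackit}=\mathrm{stackit}$ and its image is exactly the set of $312$-avoiding permutations, on which it is the identity; $\mathrm{queueit}\circ\mathrm{queueit}=\mathrm{queueit}$ and its image is exactly the set of $321$-avoiding permutations, on which it is the identity. Moreover, the restriction of $\mathrm{queueit}$ to $312$-avoiding permutations is a bijection onto the $321$-avoiding permutations, whose inverse is the restriction of $\mathrm{stackit}$ to $321$-avoiding permutations.
   Context: A weak Dyck path is a word in steps $U=(1,1)$, $D=(1,-1)$, $H=(1,0)$ starting and ending at height $0$ and never below $0$; it is peakless if no $U$ is immediately followed by $D$. Set-size record $P(\sigma)$: input $1,\ldots,n$ in order, a set (from which any element may be removed) initially empty. For $k=1,\ldots,n$ in turn, to output $\sigma_k$: if $\sigma_k$ is in the set, remove it to the output (step $D$); otherwise insert input elements into the set (one step $U$ each) until $\sigma_k$ is the next input element, then transfer it directly to output (step $H$). $P(\sigma)$ is the resulting word, a peakless weak Dyck path with $n$ steps of type $U$ or $H$. For such a path $P$, $S(P)$ (resp. $Q(P)$) is the output obtained by executing $P$ with a stack (resp. queue): input $1,\ldots,n$ in order; $U$ moves the next input element to the top of the stack (resp. back of the queue), $D$ moves the top of the stack (resp. front of the queue) to the end of the output, $H$ moves the next input element directly to the end of the output. A permutation avoids $312$ (resp. $321$) if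 there are no $i<j<k$ with $p_j<p_k<p_i$ (resp. $p_i>p_j>p_k$). *)

(* Defs.v *)
From mathcomp Require Import all_boot.
Set Implicit Arguments. Unset Strict Implicit. Unset Printing Implicit Defensive.

Inductive step := U | D | H.

Definition is_perm (n : nat) (s : seq nat) : Prop := perm_eq s (iota 1 n).

(* To output x: if x is in the set, remove it (D); otherwise insert the input
   elements i, ..., x-1 (one U each) and transfer x directly (H). *)
Fixpoint ssr_aux (nxt : nat) (set : seq nat) (s : seq nat) : seq step :=
  match s with
  | [::] => [::]
  | x :: s' =>
      if x \in set then D :: ssr_aux nxt (rem x set) s'
      else nseq (x - nxt) U ++ H :: ssr_aux x.+1 (set ++ iota nxt (x - nxt)) s'
  end.

Definition setsize_record (s : seq nat) : seq step := ssr_aux 1 [::] s.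

Fixpoint run_stack (nxt : nat) (st : seq nat) (p : seq step) : seq nat :=
  match p with
  | [::] => [::]
  | U :: p' => run_stack nxt.+1 (nxt :: st) p'
  | D :: p' => match st with
               | [::] => run_stack nxt st p' (* never happens on Dyck paths *)
               | y :: st' => y :: run_stack nxt st' p'
               end
  | H :: p' => nxt :: run_stack nxt.+1 st p'
  end.

Fixpoint run_queue (nxt : nat) (q : seq nat) (p : seq step) : seq nat :=
  match p with
  | [::] => [::]
  | U :: p' => run_queue nxt.+1 (rcons q nxt) p'
  | D :: p' => match q with
               | [::] => run_queue nxt q p'
               | y :: q' => y :: run_queue nxt q' p'
               end
  | H :: p' => nxt :: run_queue nxt.+1 q p'
  end.

Definition S_exec (p : seq step) : seq nat := run_stack 1 [::] p.
Definition Q_exec (p : seq step) : seq nat := run_queue 1 [::] p.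

Definition stackit (s : seq nat) : seq nat := S_exec (setsize_record s).
Definition queueit (s : seq nat) : seq nat := Q_exec (setsize_record s).

Definition avoids312 (p : seq nat) : Prop :=
  ~ exists i j k, [/\ i < j, j < k, k < size p &
      (nth 0 p j < nth 0 p k) && (nth 0 p k < nth 0 p i)].

Definition avoids321 (p : seq nat) : Prop :=
  ~ exists i j k, [/\ i < j, j < k, k < size p &
      (nth 0 p i > nth 0 p j) && (nth 0 p j > nth 0 p k)].

(* Main.v *)
Require Import Defs.
From mathcomp Require Import all_boot.
From mathcomp Require Import zify.
Set Implicit Arguments. Unset Strict Implicit.

Lemma rem_cat_in (x : nat) s1 s2 : x \in s1 -> rem x (s1 ++ s2) = rem x s1 ++ s2.
Proof.
elim: s1 => //= y s1 IH; rewrite in_cons.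
case: ifP => // ne; rewrite eq_sym ne /= => /IH ->.
by [].
Qed.

Lemma rem_cat_notin (x : nat) s1 s2 : x \notin s1 -> rem x (s1 ++ s2) = s1 ++ rem x s2.
Proof.
elim: s1 => //= y s1 IH; rewrite in_cons negb_or => /andP[ne nin].
by rewrite eq_sym (negbTE ne) IH.
Qed.

Lemma iota_rem nxt k x : nxt <= x < nxt + k ->
  rem x (iota nxt k) = iota nxt (x - nxt) ++ iota x.+1 (k - (x - nxt)).-1.
Proof.
move=> /andP[h1 h2].
have ek : k = (x - nxt) + (1 + (k - (x - nxt)).-1) by lia.
rewrite {1}ek iotaD iotaD rem_cat_notin; last by rewrite mem_iota; lia.
have -> : nxt + (x - nxt) = x by lia.
by rewrite /= eqxx addn1.
Qed.

Lemma perm_cons_rem (x : nat) s t : perm_eq (x :: s) t -> perm_eq s (rem x t).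
Proof.
move=> h; have xt : x \in t by rewrite -(perm_mem h) mem_head.
by rewrite -(perm_cons x); apply: (perm_trans h); apply: perm_to_rem.
Qed.

Lemma K_D x s set1 nxt k : perm_eq (x :: s) (set1 ++ iota nxt k) -> x \in set1 ->
  perm_eq s (rem x set1 ++ iota nxt k).
Proof. by move=> h xi; rewrite -rem_cat_in //; apply: perm_cons_rem. Qed.

Lemma K_H x s set1 nxt k : perm_eq (x :: s) (set1 ++ iota nxt k) -> x \notin set1 ->
  [/\ nxt <= x, x < nxt + k &
   perm_eq s ((set1 ++ iota nxt (x - nxt)) ++ iota x.+1 (k - (x - nxt)).-1)].
Proof.
move=> h xi.
have : x \in set1 ++ iota nxt k by rewrite -(perm_mem h) mem_head.
rewrite mem_cat (negbTE xi) /= mem_iota => /andP[h1 h2]; split => //.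
rewrite -catA -iota_rem ?h1 ?h2 // -rem_cat_notin //; exact: perm_cons_rem.
Qed.

Lemma run_stack_U nxt st a p :
  run_stack nxt st (nseq a U ++ p) = run_stack (nxt + a) (rev (iota nxt a) ++ st) p.
Proof.
elim: a nxt st => [|a IH] nxt st /=; first by rewrite addn0.
by rewrite IH rev_cons cat_rcons addSnnS.
Qed.

Lemma run_queue_U nxt q a p :
  run_queue nxt q (nseq a U ++ p) = run_queue (nxt + a) (q ++ iota nxt a) p.
Proof.
elim: a nxt q => [|a IH] nxt q /=; first by rewrite addn0 cats0.
by rewrite IH cat_rcons addSnnS.
Qed.

Lemma iota_split nxt k x : nxt <= x < nxt + k ->
  iota nxt k = iota nxt (x - nxt) ++ x :: iota x.+1 (k - (x - nxt)).-1.
Proof.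
move=> /andP[h1 h2].
have ek : k = (x - nxt) + (1 + (k - (x - nxt)).-1) by lia.
rewrite {1}ek iotaD iotaD.
have -> : nxt + (x - nxt) = x by lia.
by rewrite /= addn1.
Qed.

Lemma K_nil set1 nxt k : perm_eq [::] (set1 ++ iota nxt k) -> set1 = [::] /\ k = 0.
Proof.
move=> /perm_size; rewrite size_cat size_iota /= => e.
by case: set1 e => //=; case: k.
Qed.

Lemma G1S s : forall nxt set1 k st set2, perm_eq s (set1 ++ iota nxt k) ->
  size st = size set1 -> perm_eq st set2 -> all (fun z => z < nxt) st ->
  ssr_aux nxt set2 (run_stack nxt st (ssr_aux nxt set1 s)) = ssr_aux nxt set1 s.
Proof.
elim: s => [|x s IH] nxt set1 k st set2 hK hs hp ha //=.
case: ifP => xi.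
- case: st hs hp ha => [|y st'] hs hp ha.
    by case: set1 hK xi hs => [|? ?] //; rewrite in_nil.
  have yi : y \in set2 by rewrite -(perm_mem hp) mem_head.
  rewrite /= yi; congr (D :: _).
  move/andP: ha => [_ ha].
  apply: (IH _ _ _ _ _ (K_D hK xi)) => //; last exact: perm_cons_rem.
  by rewrite size_rem // -hs.
- have [h1 h2 hK'] := K_H hK (negbT xi).
  rewrite run_stack_U /=.
  have -> : nxt + (x - nxt) = x by lia.
  have -> : (x \in set2) = false.
    apply/negP; rewrite -(perm_mem hp) => xst; move/allP: ha => /(_ x xst); lia.
  congr (_ ++ H :: _).
  apply: (IH _ _ _ _ _ hK').
  + by rewrite !size_cat size_rev hs addnC.
  + apply/permP => p; move/permP: hp => /(_ p).
    rewrite !count_cat count_rev; lia.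
  + rewrite all_cat all_rev; apply/andP; split.
      by apply/allP => z; rewrite mem_iota; lia.
    by apply: sub_all ha => z; lia.
Qed.

Lemma G1Q s : forall nxt set1 k st set2, perm_eq s (set1 ++ iota nxt k) ->
  size st = size set1 -> perm_eq st set2 -> all (fun z => z < nxt) st ->
  ssr_aux nxt set2 (run_queue nxt st (ssr_aux nxt set1 s)) = ssr_aux nxt set1 s.
Proof.
elim: s => [|x s IH] nxt set1 k st set2 hK hs hp ha //=.
case: ifP => xi.
- case: st hs hp ha => [|y st'] hs hp ha.
    by case: set1 hK xi hs => [|? ?] //; rewrite in_nil.
  have yi : y \in set2 by rewrite -(perm_mem hp) mem_head.
  rewrite /= yi; congr (D :: _).
  move/andP: ha => [_ ha].
  apply: (IH _ _ _ _ _ (K_D hK xi)) => //; last exact: perm_cons_rem.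
  by rewrite size_rem // -hs.
- have [h1 h2 hK'] := K_H hK (negbT xi).
  rewrite run_queue_U /=.
  have -> : nxt + (x - nxt) = x by lia.
  have -> : (x \in set2) = false.
    apply/negP; rewrite -(perm_mem hp) => xst; move/allP: ha => /(_ x xst); lia.
  congr (_ ++ H :: _).
  apply: (IH _ _ _ _ _ hK').
  + by rewrite !size_cat hs.
  + apply/permP => p; move/permP: hp => /(_ p).
    rewrite !count_cat; lia.
  + rewrite all_cat; apply/andP; split.
      by apply: sub_all ha => z; lia.
    by apply/allP => z; rewrite mem_iota; lia.
Qed.

Lemma PermS s : forall nxt set1 k st, perm_eq s (set1 ++ iota nxt k) ->
  size st = size set1 ->
  perm_eq (run_stack nxt st (ssr_aux nxt set1 s)) (st ++ iota nxt k).
Proof.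
elim: s => [|x s IH] nxt set1 k st hK hs /=.
  have [e1 e2] := K_nil hK; subst; move: hs => /= /size0nil ->; by [].
case: ifP => xi.
- case: st hs => [|y st'] hs.
    by case: set1 hK xi hs => [|? ?] //; rewrite in_nil.
  rewrite /= perm_cons; apply: IH (K_D hK xi) _.
  by rewrite size_rem // -hs.
- have [h1 h2 hK'] := K_H hK (negbT xi).
  rewrite run_stack_U /=.
  have -> : nxt + (x - nxt) = x by lia.
  have hI := IH _ _ _ (rev (iota nxt (x - nxt)) ++ st) hK'.
  rewrite size_cat size_cat size_rev hs in hI; move: (hI (addnC _ _)) => {hI} hI.
  rewrite (iota_split (k:=k) (x:=x)); last by lia.
  apply/permP => p; move/permP: hI => /(_ p).
  rewrite /= !count_cat count_rev /=; lia.
Qed.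

Lemma PermQ s : forall nxt set1 k st, perm_eq s (set1 ++ iota nxt k) ->
  size st = size set1 ->
  perm_eq (run_queue nxt st (ssr_aux nxt set1 s)) (st ++ iota nxt k).
Proof.
elim: s => [|x s IH] nxt set1 k st hK hs /=.
  have [e1 e2] := K_nil hK; subst; move: hs => /= /size0nil ->; by [].
case: ifP => xi.
- case: st hs => [|y st'] hs.
    by case: set1 hK xi hs => [|? ?] //; rewrite in_nil.
  rewrite /= perm_cons; apply: IH (K_D hK xi) _.
  by rewrite size_rem // -hs.
- have [h1 h2 hK'] := K_H hK (negbT xi).
  rewrite run_queue_U /=.
  have -> : nxt + (x - nxt) = x by lia.
  have hI := IH _ _ _ (st ++ iota nxt (x - nxt)) hK'.
  rewrite size_cat size_cat hs in hI; move: (hI erefl) => {hI} hI.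
  rewrite (iota_split (k:=k) (x:=x)); last by lia.
  apply/permP => p; move/permP: hI => /(_ p).
  rewrite /= !count_cat /=; lia.
Qed.

Fixpoint avR (R : nat -> nat -> nat -> bool) (s : seq nat) : bool :=
  match s with
  | [::] => true
  | x :: s' => pairwise (fun b c => ~~ R x b c) s' && avR R s'
  end.

Lemma avRP R s : avR R s <-> ~ exists i j k, [/\ i < j, j < k, k < size s &
   R (nth 0 s i) (nth 0 s j) (nth 0 s k)].
Proof.
elim: s => [|x s IH] /=.
  by split => // _ [i [j [k [_ _]]]].
split.
- move=> /andP[pw av] [i [j [k [hij hjk hk hR]]]].
  case: i hij hR => [|i] hij hR.
    case: j hij hjk hR => [|j] // _ hjk.
    case: k hjk hk => [|k] // hjk hk /= hR.
    by move/(pairwiseP 0): pw => /(_ j k); rewrite !inE; move=> /(_ _ _ hjk) /negP; apply => //; lia.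
  case: j hij hjk hR => [|j] // hij hjk.
  case: k hjk hk => [|k] // hjk hk /= hR.
  by move/IH: av; apply; exists i, j, k.
- move=> H; apply/andP; split.
    apply/(pairwiseP 0) => j k hj hk hjk; apply/negP => hR; apply: H.
    by exists 0, j.+1, k.+1; rewrite !inE in hj hk; split.
  apply/IH => -[i [j [k [hij hjk hk hR]]]]; apply: H.
  by exists i.+1, j.+1, k.+1.
Qed.

Definition R312 a b c := (b < c) && (c < a).
Definition R321 a b c := (a > b) && (b > c).

Lemma avoids312P s : avoids312 s <-> avR R312 s.
Proof. by rewrite avRP. Qed.

Lemma avoids321P s : avoids321 s <-> avR R321 s.
Proof. by rewrite avRP. Qed.

Lemma pw_filter (x : nat) (r : rel nat) (q : nat -> nat -> nat -> bool) s :
  (forall y z, y < x -> ((z < x) ==> r y z) = ~~ q x y z) ->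
  (forall y z, x <= y -> ~~ q x y z) ->
  pairwise r [seq z <- s | z < x] = pairwise (fun b c => ~~ q x b c) s.
Proof.
move=> h1 h2; elim: s => [|y s IH] //=.
rewrite [RHS]pairwise_cons -IH; case: ifP => hy; rewrite ?pairwise_cons ?all_filter.
  by congr (_ && _); apply: eq_all => z /=; rewrite h1.
rewrite (_ : all _ s = true) //; apply/allP => z _; apply: h2; lia.
Qed.

Lemma pw312 x s : pairwise geq [seq z <- s | z < x] = pairwise (fun b c => ~~ R312 x b c) s.
Proof.
apply: pw_filter => y z; rewrite /R312 /=.
  by case: (ltnP z x) => /= ? ?; lia.
by move=> ?; lia.
Qed.

Lemma pw321 x s : pairwise leq [seq z <- s | z < x] = pairwise (fun b c => ~~ R321 x b c) s.
Proof.
apply: pw_filter => y z; rewrite /R321 /=.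
  by case: (ltnP z x) => /= ? ?; lia.
by move=> ?; lia.
Qed.

Lemma prefix_stack m nxt st p : m <= nxt ->
  prefix [seq z <- run_stack nxt st p | z < m] [seq z <- st | z < m].
Proof.
elim: p nxt st => [|[] p IH] nxt st hm /=; first exact: prefix0s.
- have := IH nxt.+1 (nxt :: st) (leqW hm); rewrite /= ltnNge hm //.
- case: st => [|y st]; first exact: IH.
  by rewrite /=; case: ifP => _; rewrite ?prefix_cons ?eqxx ?IH.
- by rewrite ltnNge hm /=; apply: IH; lia.
Qed.

Lemma prefix_queue m nxt q p : m <= nxt ->
  prefix [seq z <- run_queue nxt q p | z < m] [seq z <- q | z < m].
Proof.
elim: p nxt q => [|[] p IH] nxt q hm /=; first exact: prefix0s.
- have := IH nxt.+1 (rcons q nxt) (leqW hm); rewrite filter_rcons ltnNge hm //.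
- case: q => [|y q]; first exact: IH.
  by rewrite /=; case: ifP => _; rewrite ?prefix_cons ?eqxx ?IH.
- by rewrite ltnNge hm /=; apply: IH; lia.
Qed.

Lemma pw_prefix (r : rel nat) s1 s2 : prefix s1 s2 -> pairwise r s2 -> pairwise r s1.
Proof. by move=> /prefixP[s ->]; rewrite pairwise_cat => /and3P[]. Qed.

Lemma av_stack p : forall nxt st, pairwise gtn st -> all (fun z => z < nxt) st ->
  avR R312 (run_stack nxt st p).
Proof.
elim: p => [|[] p IH] nxt st hp ha //=.
- apply: IH; first by rewrite pairwise_cons hp andbT.
  rewrite /= ltnSn /=; by apply: sub_all ha => z; lia.
- case: st hp ha => [|y st'] hp ha; first exact: IH.
  move: hp; rewrite pairwise_cons => /andP[hy hp]; move: ha => /= /andP[hyn ha].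
  rewrite -pw312 IH // andbT.
  apply: pw_prefix (prefix_stack st' p (ltnW hyn)) _.
  by apply: pairwise_filter; apply: sub_pairwise hp => a b; apply: ltnW.
- rewrite -pw312 IH ?andbT //; last by apply: sub_all ha => z; lia.
  apply: pw_prefix (prefix_stack st p (leqnSn nxt)) _.
  by apply: pairwise_filter; apply: sub_pairwise hp => a b; apply: ltnW.
Qed.

Lemma av_queue p : forall nxt q, pairwise ltn q -> all (fun z => z < nxt) q ->
  avR R321 (run_queue nxt q p).
Proof.
elim: p => [|[] p IH] nxt q hp ha //=.
- apply: IH; first by rewrite pairwise_rcons hp andbT.
  rewrite all_rcons ltnSn /=; by apply: sub_all ha => z; lia.
- case: q hp ha => [|y q'] hp ha; first exact: IH.
  move: hp; rewrite pairwise_cons => /andP[hy hp]; move: ha => /= /andP[hyn ha].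
  rewrite -pw321 IH // andbT.
  apply: pw_prefix (prefix_queue q' p (ltnW hyn)) _.
  by apply: pairwise_filter; apply: sub_pairwise hp => a b; apply: ltnW.
- rewrite -pw321 IH ?andbT //; last by apply: sub_all ha => z; lia.
  apply: pw_prefix (prefix_queue q p (leqnSn nxt)) _.
  by apply: pairwise_filter; apply: sub_pairwise hp => a b; apply: ltnW.
Qed.

Lemma fixS t : forall nxt set1 k st, perm_eq t (set1 ++ iota nxt k) -> uniq t ->
  avR R312 t -> pairwise geq [seq z <- t | z < nxt] -> pairwise gtn st ->
  all (fun z => z < nxt) st -> perm_eq set1 st ->
  run_stack nxt st (ssr_aux nxt set1 t) = t.
Proof.
elim: t => [|x t IH] nxt set1 k st hK hu hav hf hp ha hps //=.
move: hu hav => /= /andP[xt hu] /andP[hpw hav].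
case: ifP => xi.
- have xst : x \in st by rewrite -(perm_mem hps).
  have xn : x < nxt by move/allP: ha => /(_ x xst).
  case: st hp ha hps xst => [|y st'] // hp ha hps xst.
  move: hp; rewrite pairwise_cons => /andP[hy hp]; move: ha => /= /andP[hyn ha].
  move: hf; rewrite /= xn pairwise_cons => /andP[hx hf].
  have exy : x = y.
    have h1 : x <= y.
      move: xst; rewrite in_cons => /orP[/eqP->//|xs'].
      by move/allP: hy => /(_ _ xs') /= /ltnW.
    have h2 : y <= x.
      case: (eqVneq y x) => [->//|nyx].
      have : y \in x :: t by rewrite (perm_mem hK) mem_cat (perm_mem hps) mem_head.
      rewrite in_cons (negbTE nyx) /= => yt.
      by move/allP: hx => /(_ y); rewrite mem_filter hyn yt => /(_ isT).
    by apply/eqP; rewrite eqn_leq h1 h2.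
  subst y; rewrite /=; congr (_ :: _).
  apply: (IH _ _ _ _ (K_D hK xi)) => //.
  by rewrite perm_sym; apply: perm_cons_rem; rewrite perm_sym.
- have [h1 h2 hK'] := K_H hK (negbT xi).
  rewrite run_stack_U /=.
  have ex : nxt + (x - nxt) = x by rewrite subnKC.
  rewrite ex.
  congr (_ :: _); apply: (IH _ _ _ _ hK') => //.
  + rewrite (@eq_in_filter _ _ (fun z => z < x)) ?pw312 //.
    move=> z zt /=; have : z != x by apply: contraNneq xt => <-.
    by move=> nzx; rewrite ltnS leq_eqVlt (negbTE nzx).
  + rewrite pairwise_cat hp andbT; apply/andP; split.
      apply/allrelP => a b; rewrite mem_rev mem_iota => ha' hb.
      move/allP: ha => /(_ b hb) /= hbn; case/andP: ha' => ha1 _.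
      exact: leq_trans hbn ha1.
    rewrite -sorted_pairwise; last by move=> b a c hab hbc; exact: ltn_trans hbc hab.
    by rewrite rev_sorted; exact: iota_ltn_sorted.
  + rewrite all_cat all_rev; apply/andP; split.
      by apply/allP => z; rewrite mem_iota ex => /andP[_ hz]; rewrite ltnS ltnW.
    by apply: sub_all ha => z hz; exact: (leq_trans hz (leq_trans h1 (leqnSn x))).
  + apply/permP => p; move/permP: hps => /(_ p).
    by rewrite !count_cat count_rev => ->; exact: addnC.
Qed.

Lemma fixQ t : forall nxt set1 k st, perm_eq t (set1 ++ iota nxt k) -> uniq t ->
  avR R321 t -> pairwise leq [seq z <- t | z < nxt] -> pairwise ltn st ->
  all (fun z => z < nxt) st -> perm_eq set1 st ->
  run_queue nxt st (ssr_aux nxt set1 t) = t.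
Proof.
elim: t => [|x t IH] nxt set1 k st hK hu hav hf hp ha hps //=.
move: hu hav => /= /andP[xt hu] /andP[hpw hav].
case: ifP => xi.
- have xst : x \in st by rewrite -(perm_mem hps).
  have xn : x < nxt by move/allP: ha => /(_ x xst).
  case: st hp ha hps xst => [|y st'] // hp ha hps xst.
  move: hp; rewrite pairwise_cons => /andP[hy hp]; move: ha => /= /andP[hyn ha].
  move: hf; rewrite /= xn pairwise_cons => /andP[hx hf].
  have exy : x = y.
    have h1 : y <= x.
      move: xst; rewrite in_cons => /orP[/eqP->//|xs'].
      by move/allP: hy => /(_ _ xs') /= /ltnW.
    have h2 : x <= y.
      case: (eqVneq y x) => [->//|nyx].
      have : y \in x :: t by rewrite (perm_mem hK) mem_cat (perm_mem hps) mem_head.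
      rewrite in_cons (negbTE nyx) /= => yt.
      by move/allP: hx => /(_ y); rewrite mem_filter hyn yt => /(_ isT).
    by apply/eqP; rewrite eqn_leq h1 h2.
  subst y; rewrite /=; congr (_ :: _).
  apply: (IH _ _ _ _ (K_D hK xi)) => //.
  by rewrite perm_sym; apply: perm_cons_rem; rewrite perm_sym.
- have [h1 h2 hK'] := K_H hK (negbT xi).
  rewrite run_queue_U /=.
  have ex : nxt + (x - nxt) = x by rewrite subnKC.
  rewrite ex.
  congr (_ :: _); apply: (IH _ _ _ _ hK') => //.
  + rewrite (@eq_in_filter _ _ (fun z => z < x)) ?pw321 //.
    move=> z zt /=; have : z != x by apply: contraNneq xt => <-.
    by move=> nzx; rewrite ltnS leq_eqVlt (negbTE nzx).
  + rewrite pairwise_cat hp /=; apply/andP; split.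
      apply/allrelP => a b ha' ; rewrite mem_iota => hb.
      move/allP: ha => /(_ a ha') /= han; case/andP: hb => hb1 _.
      exact: leq_trans han hb1.
    rewrite -sorted_pairwise; last exact: ltn_trans.
    exact: iota_ltn_sorted.
  + rewrite all_cat; apply/andP; split.
      by apply: sub_all ha => z hz; exact: (leq_trans hz (leq_trans h1 (leqnSn x))).
    by apply/allP => z; rewrite mem_iota ex => /andP[_ hz]; rewrite ltnS ltnW.
  + apply/permP => p; move/permP: hps => /(_ p).
    by rewrite !count_cat => ->.
Qed.
Lemma filter1_nil n t : is_perm n t -> [seq z <- t | z < 1] = [::].
Proof.
move=> hK; rewrite (@eq_in_filter _ _ pred0) ?filter_pred0 // => z.
by rewrite (perm_mem hK) mem_iota; case: z.
Qed.

Lemma stack_perm n s : is_perm n s -> is_perm n (stackit s).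
Proof. by move=> hK; apply: (PermS (set1 := [::]) (st := [::]) hK). Qed.

Lemma queue_perm n s : is_perm n s -> is_perm n (queueit s).
Proof. by move=> hK; apply: (PermQ (set1 := [::]) (st := [::]) hK). Qed.

Lemma stack_ssr n s : is_perm n s -> setsize_record (stackit s) = setsize_record s.
Proof. by move=> hK; apply: (G1S (set1 := [::]) (st := [::]) (set2 := [::]) hK). Qed.

Lemma queue_ssr n s : is_perm n s -> setsize_record (queueit s) = setsize_record s.
Proof. by move=> hK; apply: (G1Q (set1 := [::]) (st := [::]) (set2 := [::]) hK). Qed.

Lemma stack_av s : avoids312 (stackit s).
Proof. by apply/avoids312P; apply: av_stack. Qed.

Lemma queue_av s : avoids321 (queueit s).
Proof. by apply/avoids321P; apply: av_queue. Qed.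

Lemma stack_fix n t : is_perm n t -> avoids312 t -> stackit t = t.
Proof.
move=> hK /avoids312P hav.
apply: (fixS (set1 := [::]) (st := [::]) hK) => //.
  by rewrite (perm_uniq hK) iota_uniq.
by rewrite (filter1_nil hK).
Qed.

Lemma queue_fix n t : is_perm n t -> avoids321 t -> queueit t = t.
Proof.
move=> hK /avoids321P hav.
apply: (fixQ (set1 := [::]) (st := [::]) hK) => //.
  by rewrite (perm_uniq hK) iota_uniq.
by rewrite (filter1_nil hK).
Qed.

Unset Implicit Arguments.
Theorem mainTheorem6 (n : nat) (hn : 1 <= n) :
  (* stackit *)
  (forall s, is_perm n s -> stackit (stackit s) = stackit s) /\
  (forall t, (is_perm n t /\ avoids312 t) <->
             exists s, is_perm n s /\ stackit s = t) /\
  (forall t, is_perm n t -> avoids312 t -> stackit t = t) /\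
  (* queueit *)
  (forall s, is_perm n s -> queueit (queueit s) = queueit s) /\
  (forall t, (is_perm n t /\ avoids321 t) <->
             exists s, is_perm n s /\ queueit s = t) /\
  (forall t, is_perm n t -> avoids321 t -> queueit t = t) /\
  (* bijection between 312-avoiders and 321-avoiders *)
  (forall s, is_perm n s -> avoids312 s ->
             is_perm n (queueit s) /\ avoids321 (queueit s)) /\
  (forall t, is_perm n t -> avoids321 t ->
             is_perm n (stackit t) /\ avoids312 (stackit t)) /\
  (forall s, is_perm n s -> avoids312 s -> stackit (queueit s) = s) /\
  (forall t, is_perm n t -> avoids321 t -> queueit (stackit t) = t).
Proof.
split.
  move=> s hs; change (S_exec (setsize_record (stackit s)) = stackit s).
  by rewrite (stack_ssr hs).
split.
  move=> t; split.
    by move=> [ht hav]; exists t; split => //; apply: stack_fix ht hav.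
  by move=> [s [hs <-]]; split; [apply: stack_perm | apply: stack_av].
split; first exact: stack_fix.
split.
  move=> s hs; change (Q_exec (setsize_record (queueit s)) = queueit s).
  by rewrite (queue_ssr hs).
split.
  move=> t; split.
    by move=> [ht hav]; exists t; split => //; apply: queue_fix ht hav.
  by move=> [s [hs <-]]; split; [apply: queue_perm | apply: queue_av].
split; first exact: queue_fix.
split.
  by move=> s hs _; split; [apply: queue_perm | apply: queue_av].
split.
  by move=> s hs _; split; [apply: stack_perm | apply: stack_av].
split.
  move=> s hs hav; change (S_exec (setsize_record (queueit s)) = s).
  by rewrite (queue_ssr hs); apply: stack_fix hs hav.
move=> t ht hav; change (Q_exec (setsize_record (stackit t)) = t).
by rewrite (stack_ssr ht); apply: queue_fix ht hav.
Qed.
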